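(* Let $K\ge1$, $N\ge1$, $t\in\{0,1,\dots,K\}$, and for each file $i\in\{1,\dots,N\}$ and each subset $\mathcal{S}\subseteq\{1,\dots,K\}$ with $|\mathcal{S}|=t$ let $W_{i,\mathcal{S}}$ be a binary string, all of a common length. For a demand $\boldsymbol{d}=(d_1,\dots,d_K)\in\{1,\dots,N\}^K$ and a subset $\mathcal{A}\subseteq\{1,\dots,K\}$ with $|\mathcal{A}|=t+1$, define $Y_{\mathcal{A}}=\bigoplus_{x\in\mathcal{A}}W_{d_x,\mathcal{A}\setminus\{x\}}$ (bitwise XOR). Let $\mathcal{U}$ be a set of $N_{\mathrm{e}}(\boldsymbol{d})$ users requesting $N_{\mathrm{e}}(\boldsymbol{d})$ distinct files, where $N_{\mathrm{e}}(\boldsymbol{d})$ is the number of distinct entries of $\boldsymbol{d}$. Let $\mathcal{B}\subseteq\{1,\dots,K\}$ with $\mathcal{U}\subseteq\mathcal{B}$ and $|\mathcal{B}|=N_{\mathrm{e}}(\boldsymbol{d})+t+1$, and let $\mathcal{V}_{\mathrm{F}}$ be the family of all subsets $\mathcal{V}\subseteq\mathcal{B}$ such that each file requested in $\boldsymbol{d}$ is requested by exactly one user in $\mathcal{V}$. Then $$\bigoplus_{\mathcal{V}\in\mathcal{V}_{\mathrm{F}}}Y_{\mathcal{B}\setminus\mathcal{V}}=0.$$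
   Context: In the paper the strings $W_{i,\mathcal{S}}$ are the subfiles of the symmetric batch prefetching: file $i$ is split into $\binom{K}{t}$ equal-size parts indexed by the size-$t$ subsets $\mathcal{S}$ of users, and user $k$ caches all $W_{i,\mathcal{S}}$ with $k\in\mathcal{S}$. The users in $\mathcal{U}$ are called leaders. Note $|\mathcal{B}\setminus\mathcal{V}|=t+1$ for every $\mathcal{V}\in\mathcal{V}_{\mathrm{F}}$. *)

(* Defs.v *)
(* Users are 'I_K (0-indexed), files are 'I_N, bit positions 'I_L. *)
From mathcomp Require Import all_boot.
Set Implicit Arguments. Unset Strict Implicit. Unset Printing Implicit Defensive.

Definition bxor_big (L : nat) (I : finType) (P : pred I) (F : I -> 'I_L -> bool)
  : 'I_L -> bool := fun j => \big[addb/false]_(i | P i) F i j.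

Definition Ne (K N : nat) (d : 'I_K -> 'I_N) : nat := #|[set d k | k : 'I_K]|.

Definition Ycoded (K N L : nat) (W : 'I_N -> {set 'I_K} -> 'I_L -> bool)
  (d : 'I_K -> 'I_N) (A : {set 'I_K}) : 'I_L -> bool :=
  bxor_big (mem A) (fun x => W (d x) (A :\ x)).

Definition VF (K N : nat) (d : 'I_K -> 'I_N) (B : {set 'I_K}) : {set {set 'I_K}} :=
  [set V : {set 'I_K} | (V \subset B) &&
     [forall n in [set d k | k : 'I_K], #|[set k in V | d k == n]| == 1]].

(* Main.v *)
Require Import Defs.
From mathcomp Require Import all_boot.
From Stdlib Require Import FunctionalExtensionality.
Set Implicit Arguments. Unset Strict Implicit.


Lemma xor_invol (T : finType) (P : pred T) (F : T -> bool) (f : T -> T) :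
  (forall p, f (f p) = p) -> (forall p, P p -> P (f p)) ->
  (forall p, P p -> f p != p) -> (forall p, P p -> F (f p) = F p) ->
  \big[addb/false]_(p | P p) F p = false.
Proof.
move=> ff Pf nf Ff.
pose r (p : T) := nat_of_ord (enum_rank p).
rewrite (bigID (fun p => r p < r (f p))) /=.
set S1 := \big[addb/false]_(i | _) _.
rewrite (reindex_inj (can_inj ff)) /=.
rewrite (eq_big (fun p => P p && (r p < r (f p))) F); first by rewrite addbb.
  move=> p; rewrite ff.
  case Pp: (P p) => /=; last first.
    have /negbTE -> // : ~~ P (f p) by apply/negP => /Pf; rewrite ff Pp.
  rewrite (Pf _ Pp) /= -leqNgt leq_eqVlt.
  case: eqP => //= E; exfalso; move/negP: (nf _ Pp); apply.
  by apply/eqP; apply: enum_rank_inj; apply: ord_inj.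
move=> p /andP[Pp _]; rewrite -[in RHS](ff p); exact: (esym (Ff _ Pp)).
Qed.

Definition partner (K N : nat) (d : 'I_K -> 'I_N) (V : {set 'I_K}) (x : 'I_K) :=
  odflt x [pick y in V | d y == d x].

Lemma partner_spec (K N : nat) (d : 'I_K -> 'I_N) (B V : {set 'I_K}) (x : 'I_K) :
  V \in VF d B -> x \in B :\: V ->
  [/\ partner d V x \in V, d (partner d V x) = d x &
      [set k in V | d k == d x] = [set partner d V x]].
Proof.
rewrite inE => /andP[VB /forallP Hn] xBV.
have /cards1P [z Hz] : #|[set k in V | d k == d x]| == 1.
  by have /implyP := Hn (d x); apply; apply: imset_f.
rewrite /partner; case: pickP => [y /= /andP[yV /eqP dy] | H] /=.
  have : y \in [set k in V | d k == d x] by rewrite inE yV dy eqxx.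
  by rewrite Hz inE => /eqP yz; split => //; rewrite yz.
have : z \in [set k in V | d k == d x] by rewrite Hz set11.
by rewrite inE H.
Qed.

Lemma swap_spec (K N : nat) (d : 'I_K -> 'I_N) (B V : {set 'I_K}) (x : 'I_K) :
  V \in VF d B -> x \in B :\: V ->
  let y := partner d V x in let V' := x |: (V :\ y) in
  [/\ V' \in VF d B, y \in B :\: V', partner d V' y = x, y |: (V' :\ x) = V
    & (B :\: V') :\ y = (B :\: V) :\ x ].
Proof.
move=> VF1 xBV y V'.
have [yV dy Sy] := partner_spec VF1 xBV.
have H1 := VF1; rewrite inE in H1; case/andP: H1 => VB /forallP Hn.
have H2 := xBV; rewrite !inE in H2; case/andP: H2 => xV xB.
have yx : y != x by apply/eqP => yx; rewrite -yx yV in xV.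
have SV' : forall n, [set k in V' | d k == n] =
    if n == d x then [set x] else [set k in V | d k == n].
  move=> n; apply/setP => k; case: eqP => [-> | /eqP nx].
    rewrite !inE; case: (eqVneq k x) => [-> | kx] /=; first by rewrite eqxx.
    apply/negbTE/negP => /andP[/andP[ky kV] dk].
    have : k \in [set k in V | d k == d x] by rewrite inE kV dk.
    by rewrite Sy inE (negbTE ky).
  rewrite !inE; case: (eqVneq k x) => [-> | kx] /=.
    by rewrite (negbTE xV) eq_sym (negbTE nx) andbF.
  case: (eqVneq k y) => [-> | ky] //=.
  by rewrite yV dy eq_sym (negbTE nx).
have V'VF : V' \in VF d B.
  rewrite inE; apply/andP; split.
    apply/subsetP => k; rewrite !inE => /orP[/eqP -> // | /andP[_ kV]].
    exact: (subsetP VB).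
  apply/forallP => n; apply/implyP => nI; rewrite SV'.
  case: ifP => _; first by rewrite cards1.
  exact: (implyP (Hn n) nI).
have yBV' : y \in B :\: V'.
  by rewrite !inE eqxx /= orbF yx (subsetP VB).
split; [exact: V'VF | exact: yBV' | | |].
- have [_ _ S'] := partner_spec V'VF yBV'.
  by move: S'; rewrite SV' dy eqxx => /set1_inj.
- apply/setP => k; rewrite !inE; case: (eqVneq k y) => [-> | ky] //=.
  case: (eqVneq k x) => [-> | kx] //=; by rewrite (negbTE xV).
- apply/setP => k; rewrite !inE; case: (eqVneq k y) => [-> | ky] //=.
    by rewrite yV andbF.
  by case: (eqVneq k x) => [->|] //=; rewrite andbA.
Qed.

Theorem lemma1 (K N t L : nat)
  (W : 'I_N -> {set 'I_K} -> 'I_L -> bool)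
  (d : 'I_K -> 'I_N) (U B : {set 'I_K}) :
  1 <= K -> 1 <= N -> t <= K ->
  #|U| = Ne d -> {in U &, injective d} ->
  U \subset B -> #|B| = Ne d + t + 1 ->
  bxor_big (mem (VF d B)) (fun V => Ycoded W d (B :\: V)) = (fun _ => false).
Proof.
move=> _ _ _ _ _ _ _.
apply: functional_extensionality => j.
rewrite /bxor_big /Ycoded /bxor_big pair_big_dep /=.
pose P := fun p : {set 'I_K} * 'I_K => (p.1 \in VF d B) && (p.2 \in B :\: p.1).
pose h := fun p : {set 'I_K} * 'I_K =>
  (p.2 |: (p.1 :\ partner d p.1 p.2), partner d p.1 p.2).
pose f := fun p => if P p then h p else p.
have key : forall V x, P (V, x) ->
   [/\ P (h (V, x)), h (h (V, x)) = (V, x), h (V, x) != (V, x) &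
       (B :\: (h (V, x)).1) :\ (h (V, x)).2 = (B :\: V) :\ x /\
       d (h (V, x)).2 = d x].
  move=> V x /andP[/= H1 H2].
  have [A1 A2 A3 A4 A5] := swap_spec H1 H2.
  have [B1 B2 _] := partner_spec H1 H2.
  rewrite /h /= A3 A4; split => //.
  - by rewrite /P /= A1 A2.
  - apply/negP => /eqP [] _ E.
    by move: H2; rewrite inE -E B1.
apply: (@xor_invol _ P _ f).
- move=> [V x]; case HP: (P (V, x)); last by rewrite /f !HP.
  by have [Ph hh _ _] := key V x HP; rewrite /f HP Ph hh.
- move=> [V x] HP; rewrite /f HP.
  by have [] := key V x HP.
- move=> [V x] HP; rewrite /f HP.
  by have [] := key V x HP.
- move=> [V x] HP; rewrite /f HP.
  by have [_ _ _ [-> ->]] := key V x HP.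
Qed.
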